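(* Let $M\ge2$, $N,K\ge1$ be integers, $B\in\mathbb R$, and for $n=1,\dots,N$, $k=1,\dots,K$ let $S^{(2)}_{n,k}\ge 0$ and $S^{(3)}_{n,k}>0$ be given real numbers. Consider the problem, over real variables $\{B_{n,k}\}$ (no integrality or nonnegativity constraint), $$\min_{\{B_{n,k}\}}\ \prod_{n=1}^N\prod_{k=1}^K\Big(1+S^{(2)}_{n,k}+\Gamma\!\Big(\tfrac{2M-1}{M-1}\Big)2^{-\frac{B_{n,k}}{M-1}}S^{(3)}_{n,k}\Big)\quad\text{s.t.}\quad \sum_{n=1}^N\sum_{k=1}^K B_{n,k}\le B .$$ Its solution is $$B^\star_{n,k}=\frac{B}{NK}+(M-1)\log_2\!\Big(\frac{S^{(3)}_{n,k}}{1+S^{(2)}_{n,k}}\Big)+\frac{M-1}{NK}\sum_{p=1}^N\sum_{q=1}^K\log_2\!\Big(\frac{1+S^{(2)}_{p,q}}{S^{(3)}_{p,q}}\Big).$$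
   Context: $\Gamma$ denotes the Euler Gamma function. (In the paper, $S^{(2)}_{n,k}$ and $S^{(3)}_{n,k}$ are the normalized intra-cluster and inter-cluster interference powers of user $(n,k)$ and $B_{n,k}$ its number of CSI feedback bits, but the statement is purely about the optimization problem above.) *)

(* Defs.v *)
From Stdlib Require Import Reals.
From Coquelicot Require Import Coquelicot.
Open Scope R_scope.

Definition Gamma (x : R) : R :=
  RInt_gen (fun t => Rpower t (x - 1) * exp (- t)) (at_right 0) (Rbar_locally p_infty).

Definition log2 (x : R) : R := ln x / ln 2.

Fixpoint rsum (n : nat) (f : nat -> R) : R :=
  match n with O => 0 | S m => rsum m f + f m end.
Fixpoint rprod (n : nat) (f : nat -> R) : R :=
  match n with O => 1 | S m => rprod m f * f m end.

(* Indices n = 1..N, k = 1..K of the paper are encoded 0-based: n < N, k < K. *)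
Definition objective (M N K : nat) (S2 S3 Bv : nat -> nat -> R) : R :=
  rprod N (fun n => rprod K (fun k =>
    1 + S2 n k
    + Gamma ((2 * INR M - 1) / (INR M - 1))
      * Rpower 2 (- Bv n k / (INR M - 1)) * S3 n k)).

Definition feasible (N K : nat) (B : R) (Bv : nat -> nat -> R) : Prop :=
  rsum N (fun n => rsum K (fun k => Bv n k)) <= B.

Definition is_minimizer (M N K : nat) (B : R) (S2 S3 Bv : nat -> nat -> R) : Prop :=
  feasible N K B Bv /\
  forall Bv', feasible N K B Bv' -> objective M N K S2 S3 Bv <= objective M N K S2 S3 Bv'.

Definition Bstar (M N K : nat) (B : R) (S2 S3 : nat -> nat -> R) (n k : nat) : R :=
  B / INR (N * K)
  + (INR M - 1) * log2 (S3 n k / (1 + S2 n k))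
  + (INR M - 1) / INR (N * K)
    * rsum N (fun p => rsum K (fun q => log2 ((1 + S2 p q) / S3 p q))).

(* Main.v *)
Require Import Defs.
From Stdlib Require Import Reals Lra Lia.
From Coquelicot Require Import Coquelicot.
Open Scope R_scope.


Lemma ex_RInt_cont (f : R -> R) a b : 0 < a -> a <= b ->
  (forall t, 0 < t -> continuous f t) -> ex_RInt f a b.
Proof.
  intros Ha Hab Hc. apply (@ex_RInt_continuous R_CompleteNormedModule). intros z Hz.
  rewrite Rmin_left in Hz by lra. apply Hc. lra.
Qed.

Lemma RInt_le_const (f : R -> R) a b c : a <= b -> ex_RInt f a b ->
  (forall x, a < x < b -> f x <= c) -> RInt f a b <= (b - a) * c.
Proof.
  intros Hab Hf H.
  assert (E : RInt (fun _ => c) a b = (b - a) * c).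
  { rewrite RInt_const. reflexivity. }
  rewrite <- E. apply RInt_le; auto. apply ex_RInt_const.
Qed.

Lemma RInt_ge_const (f : R -> R) a b c : a <= b -> ex_RInt f a b ->
  (forall x, a < x < b -> c <= f x) -> (b - a) * c <= RInt f a b.
Proof.
  intros Hab Hf H.
  assert (E : RInt (fun _ => c) a b = (b - a) * c).
  { rewrite RInt_const. reflexivity. }
  rewrite <- E. apply RInt_le; auto. apply ex_RInt_const.
Qed.

Lemma is_RInt_h b1 b2 : 0 < b1 -> b1 <= b2 ->
  is_RInt (fun t => 256 / (t * t)) b1 b2 (256 / b1 - 256 / b2).
Proof.
  intros H1 H2.
  replace (256 / b1 - 256 / b2) with (minus ((fun t => - 256 / t) b2) ((fun t => -256/t) b1)).
  2:{ unfold minus, plus, opp; simpl. field. lra. }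
  apply (@is_RInt_derive R_CompleteNormedModule (fun t => -256/t)).
  - intros x Hx. rewrite Rmin_left in Hx by lra. auto_derive. lra. field. lra.
  - intros x Hx. rewrite Rmin_left in Hx by lra.
    apply (ex_derive_continuous (fun t => 256 / (t*t))). auto_derive. nra.
Qed.

Lemma ballR (x e y : R) : ball x e y <-> Rabs (y - x) < e.
Proof. reflexivity. Qed.

Notation FP := (filter_prod (at_right 0) (Rbar_locally p_infty)).

Lemma FP_proper : ProperFilter FP.
Proof. apply filter_prod_proper. Qed.

Lemma FP_ev (d M : R) : 0 < d -> FP (fun ab => 0 < fst ab < d /\ M < snd ab).
Proof.
  intros Hd.
  apply (Filter_prod _ _ _ (fun a => 0 < a < d) (fun b => M < b)).
  - exists (mkposreal d Hd). intros y Hy Hp. apply ballR in Hy. simpl in Hy.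
    split; auto. apply Rabs_def2 in Hy. simpl in Hy. unfold minus, plus, opp in Hy; simpl in Hy. lra.
  - exists M. auto.
  - intros x y Hx Hy. simpl. auto.
Qed.

Lemma gen_pos (f : R -> R) (m : R) :
  (forall t, 0 < t -> continuous f t) ->
  (forall t, 0 < t -> 0 <= f t) ->
  (forall t, 0 < t <= 1 -> f t <= 1) ->
  (forall t, 1 <= t -> f t <= 256/(t*t)) ->
  0 < m -> (forall t, 1 <= t <= 2 -> m <= f t) ->
  0 < RInt_gen f (at_right 0) (Rbar_locally p_infty).
Proof.
  intros Hc H0 H1 H2 Hm Hm2.
  set (g := fun ab : R * R => RInt f (fst ab) (snd ab)).
  assert (Hex : forall a b, 0 < a -> a <= b -> ex_RInt f a b).
  { intros a b Ha Hab. apply ex_RInt_cont; auto. }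
  assert (Hnn : forall a b, 0 < a -> a <= b -> 0 <= RInt f a b).
  { intros a b Ha Hab. replace 0 with ((b - a) * 0) by ring.
    apply RInt_ge_const; auto. intros x Hx. apply H0. lra. }
  assert (Hcau : forall eps : posreal, exists x : R, filtermap g FP (ball x eps)).
  { intros [eps Heps]. simpl.
    set (d := Rmin 1 (eps / 3)). set (M0 := Rmax 1 (768 / eps)).
    assert (Hd0 : 0 < d) by (unfold d; apply Rmin_pos; lra).
    assert (Hd1 : d <= 1) by apply Rmin_l.
    assert (Hd2 : d <= eps / 3) by apply Rmin_r.
    assert (HM1 : 1 <= M0) by apply Rmax_l.
    assert (HM2 : 768 / eps <= M0) by apply Rmax_r.
    assert (HM3 : 256 / M0 <= eps / 3).
    { assert (Hp : 0 < 768 / eps) by (apply Rdiv_lt_0_compat; lra).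
      apply Rle_trans with (256 / (768 / eps)).
      - unfold Rdiv at 1 2. apply Rmult_le_compat_l; [lra|]. apply Rinv_le_contravar; lra.
      - right. field. lra. }
    exists (g (d, M0)). unfold filtermap.
    apply filter_imp with (2 := FP_ev d M0 Hd0).
    intros [a b] [[Ha1 Ha2] Hb]. simpl in *. apply ballR. unfold g; simpl.
    rewrite <- (RInt_Chasles f a d b) by (apply Hex; lra).
    rewrite <- (RInt_Chasles f d M0 b) by (apply Hex; lra).
    unfold plus; simpl.
    assert (A1 : RInt f a d <= (d - a) * 1).
    { apply RInt_le_const. lra. apply Hex; lra. intros x Hx. apply H1. lra. }
    assert (A2 : 0 <= RInt f a d) by (apply Hnn; lra).
    assert (B1 : RInt f M0 b <= 256 / M0 - 256 / b).
    { rewrite <- (is_RInt_unique _ _ _ _ (is_RInt_h M0 b ltac:(lra) ltac:(lra))).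
      apply RInt_le. lra. apply Hex; lra.
      eexists; apply (is_RInt_h M0 b); lra.
      intros x Hx. apply H2. lra. }
    assert (B2 : 0 <= RInt f M0 b) by (apply Hnn; lra).
    assert (B3 : 0 < 256 / b) by (apply Rdiv_lt_0_compat; lra).
    replace (RInt f a d + (RInt f d M0 + RInt f M0 b) - RInt f d M0)
      with (RInt f a d + RInt f M0 b) by ring.
    rewrite Rabs_pos_eq by lra. lra. }
  assert (HP : ProperFilter (filtermap g FP)).
  { apply filtermap_proper_filter. apply FP_proper. }
  set (l := R_complete_lim (filtermap g FP)).
  assert (Hl : forall eps : posreal, filtermap g FP (ball l eps)).
  { apply R_complete_ax1; auto. apply Proper_StrongProper; auto. }
  assert (Hgen : is_RInt_gen f (at_right 0) (Rbar_locally p_infty) l).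
  { unfold is_RInt_gen, filterlimi, filter_le, filtermapi.
    intros P [eps HPe].
    apply filter_imp with (2 := filter_and _ _ (Hl eps : FP (fun ab => ball l eps (g ab))) (FP_ev 1 1 Rlt_0_1)).
    intros [a b] [Hb [[Ha1 Ha2] Hb2]]. simpl in *. exists (g (a, b)). split.
    - unfold g; simpl. apply (@RInt_correct R_CompleteNormedModule). apply Hex; lra.
    - apply HPe. exact Hb. }
  rewrite (is_RInt_gen_unique _ _ Hgen).
  destruct (Rlt_or_le 0 l) as [Hlp|Hln]; auto. exfalso.
  assert (Hm' : 0 < m) by lra.
  destruct FP_proper as [Hne _].
  destruct (Hne _ (filter_and _ _ (Hl (mkposreal m Hm') : FP (fun ab => ball l m (g ab))) (FP_ev 1 2 Rlt_0_1)))
    as [[a b] [Hb [[Ha1 Ha2] Hb2]]].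
  simpl in *. apply ballR in Hb. unfold g in Hb; simpl in Hb.
  rewrite <- (RInt_Chasles f a 1 b) in Hb by (apply Hex; lra).
  rewrite <- (RInt_Chasles f 1 2 b) in Hb by (apply Hex; lra).
  unfold plus in Hb; simpl in Hb.
  assert (C1 : (2 - 1) * m <= RInt f 1 2).
  { apply RInt_ge_const. lra. apply Hex; lra. intros x Hx. apply Hm2. lra. }
  assert (C2 : 0 <= RInt f a 1) by (apply Hnn; lra).
  assert (C3 : 0 <= RInt f 2 b) by (apply Hnn; lra).
  apply Rabs_def2 in Hb. unfold g in *; simpl in *. unfold minus, plus, opp in Hb; simpl in Hb. lra.
Qed.

Lemma exp_le_exp' a b : a <= b -> exp a <= exp b.
Proof. intros [H|H]. apply Rlt_le, exp_increasing; auto. subst; lra. Qed.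

Lemma Gamma_int_pos (x : R) : 2 <= x <= 3 ->
  0 < RInt_gen (fun t => Rpower t (x - 1) * exp (- t)) (at_right 0) (Rbar_locally p_infty).
Proof.
  intros Hx.
  apply gen_pos with (m := exp (-2)).
  - intros t Ht. apply (ex_derive_continuous (fun t => Rpower t (x - 1) * exp (- t))). auto_derive; auto.
    eexists. apply is_derive_Reals. apply derivable_pt_lim_power. auto.
  - intros t Ht. apply Rlt_le, Rmult_lt_0_compat; [unfold Rpower|]; apply exp_pos.
  - intros t Ht.
    assert (A : Rpower t (x - 1) <= Rpower 1 (x - 1)).
    { apply Rle_Rpower_l; lra. }
    unfold Rpower at 2 in A. rewrite ln_1, Rmult_0_r, exp_0 in A.
    assert (B : exp (- t) <= 1). { rewrite <- exp_0. apply exp_le_exp'. lra. }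
    assert (C : 0 < Rpower t (x - 1)) by (unfold Rpower; apply exp_pos).
    assert (D : 0 < exp (- t)) by apply exp_pos.
    nra.
  - intros t Ht.
    assert (A : Rpower t (x - 1) <= Rpower t 2).
    { apply Rle_Rpower; lra. }
    replace 2 with (INR 2) in A by (simpl; ring).
    rewrite Rpower_pow in A by lra.
    assert (C : 0 < Rpower t (x - 1)) by (unfold Rpower; apply exp_pos).
    assert (E : exp t = exp (t/4) ^ 4).
    { simpl. rewrite Rmult_1_r, <- !exp_plus. f_equal. field. }
    assert (F : t / 4 <= exp (t / 4)).
    { pose proof (exp_ineq1_le (t/4)). lra. }
    assert (G : (t/4) ^ 4 <= exp (t/4) ^ 4).
    { apply pow_incr. lra. }
    assert (Ht4 : t ^ 4 <= 256 * exp t).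
    { rewrite E. replace (t ^ 4) with (256 * (t/4)^4) by (simpl; field). lra. }
    rewrite exp_Ropp.
    assert (Pe : 0 < exp t) by apply exp_pos.
    apply Rle_trans with (t ^ 2 * / exp t).
    { apply Rmult_le_compat_r. apply Rlt_le, Rinv_0_lt_compat; auto. auto. }
    apply Rmult_le_reg_r with (exp t * (t * t)). nra.
    replace (t ^ 2 * / exp t * (exp t * (t * t))) with (t ^ 4) by (simpl; field; lra).
    replace (256 / (t * t) * (exp t * (t * t))) with (256 * exp t) by (field; lra).
    auto.
  - apply exp_pos.
  - intros t Ht.
    assert (A : Rpower t 0 <= Rpower t (x - 1)).
    { apply Rle_Rpower; lra. }
    rewrite Rpower_O in A by lra.
    assert (B : exp (-2) <= exp (- t)). { apply exp_le_exp'. lra. }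
    assert (D : 0 < exp (- t)) by apply exp_pos.
    nra.
Qed.

Lemma rsum_ext n f g : (forall i, (i < n)%nat -> f i = g i) -> rsum n f = rsum n g.
Proof. induction n; intros H; simpl; auto. rewrite IHn, H; auto; intros; apply H; lia. Qed.

Lemma rprod_ext n f g : (forall i, (i < n)%nat -> f i = g i) -> rprod n f = rprod n g.
Proof. induction n; intros H; simpl; auto. rewrite IHn, H; auto; intros; apply H; lia. Qed.

Lemma rsum_plus n f g : rsum n (fun i => f i + g i) = rsum n f + rsum n g.
Proof. induction n; simpl; [ring|]. rewrite IHn; ring. Qed.

Lemma rsum_scal n c f : rsum n (fun i => c * f i) = c * rsum n f.
Proof. induction n; simpl; [ring|]. rewrite IHn; ring. Qed.

Lemma rsum_const n c : rsum n (fun _ => c) = INR n * c.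
Proof. induction n; cbn [rsum]. simpl; ring. rewrite IHn, S_INR; ring. Qed.

Lemma rprod_pos n f : (forall i, (i < n)%nat -> 0 < f i) -> 0 < rprod n f.
Proof. induction n; intros H; simpl; [lra|]. apply Rmult_lt_0_compat; [apply IHn|apply H]; intros; try apply H; lia. Qed.

Lemma rprod_le n f g : (forall i, (i < n)%nat -> 0 <= f i <= g i) -> rprod n f <= rprod n g.
Proof.
  induction n; intros H; simpl; [lra|].
  assert (H0 : forall i, (i < n)%nat -> 0 <= f i) by (intros i Hi; apply H; lia).
  assert (P : 0 <= rprod n f).
  { clear IHn H. induction n; simpl; [lra|]. apply Rmult_le_pos; [apply IHn|apply H0]; intros; try apply H0; lia. }
  apply Rmult_le_compat; auto; first [apply IHn; intros; apply H; lia | apply H; lia].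
Qed.

Lemma rprod_lt n f g : (forall i, (i < n)%nat -> 0 < f i <= g i) ->
  (exists i, (i < n)%nat /\ f i < g i) -> rprod n f < rprod n g.
Proof.
  induction n; intros H [j [Hj Hlt]]; [lia|]. simpl.
  assert (Pf : 0 < rprod n f) by (apply rprod_pos; intros; apply H; lia).
  assert (Le : rprod n f <= rprod n g) by (apply rprod_le; intros i Hi; split; [apply Rlt_le|]; apply H; lia).
  assert (Hn : 0 < f n <= g n) by (apply H; lia).
  destruct (Nat.eq_dec j n) as [->|Hne].
  - apply Rle_lt_trans with (rprod n g * f n). apply Rmult_le_compat_r; lra.
    apply Rmult_lt_compat_l; lra.
  - assert (IH : rprod n f < rprod n g). { apply IHn. intros; apply H; lia. exists j; split; auto; lia. }
    apply Rlt_le_trans with (rprod n g * f n). apply Rmult_lt_compat_r; lra.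
    apply Rmult_le_compat_l; lra.
Qed.

Lemma rprod_mul_exp n f h : rprod n (fun i => f i * exp (h i)) = rprod n f * exp (rsum n h).
Proof. induction n; simpl. rewrite exp_0; ring. rewrite IHn, exp_plus; ring. Qed.

Lemma key_ineq c t : 0 < c ->
  (1 + c) * exp (c / (1 + c) * t) <= 1 + c * exp t /\
  (t <> 0 -> (1 + c) * exp (c / (1 + c) * t) < 1 + c * exp t).
Proof.
  intros Hc. set (w := c / (1 + c)).
  assert (Hw : c * (1 - w) = w) by (unfold w; field; lra).
  assert (Hw0 : 0 < w < 1).
  { unfold w; split. apply Rdiv_lt_0_compat; lra.
    apply Rmult_lt_reg_r with (1 + c). lra. field_simplify; lra. }
  set (E := exp (w * t)). set (P := exp (- (w * t))). set (Q := exp ((1 - w) * t)).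
  assert (EP : E * P = 1). { unfold E, P. rewrite <- exp_plus. replace (w * t + - (w * t)) with 0 by ring. apply exp_0. }
  assert (EQ : E * Q = exp t). { unfold E, Q. rewrite <- exp_plus. f_equal. ring. }
  assert (Id : 1 + c * exp t - (1 + c) * E = E * (P - (1 - w * t)) + c * E * (Q - (1 + (1 - w) * t))).
  { rewrite <- EQ. replace 1 with (E * P) at 1 by auto. replace (c * E * (Q - (1 + (1 - w) * t))) with (c * E * Q - c * E - (c * (1 - w)) * E * t) by ring.
    rewrite Hw. ring. }
  assert (PE : 0 < E) by apply exp_pos.
  assert (P1 : 1 + - (w * t) <= P) by apply exp_ineq1_le.
  assert (Q1 : 1 + (1 - w) * t <= Q) by apply exp_ineq1_le.
  split.
  - assert (0 <= E * (P - (1 - w * t))) by (apply Rmult_le_pos; lra).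
    assert (0 <= c * E * (Q - (1 + (1 - w) * t))) by (apply Rmult_le_pos; [apply Rmult_le_pos|]; lra).
    lra.
  - intros Ht.
    assert (P2 : 1 + - (w * t) < P). { apply exp_ineq1. intro H. apply Ht. nra. }
    assert (0 < E * (P - (1 - w * t))) by (apply Rmult_lt_0_compat; lra).
    assert (0 <= c * E * (Q - (1 + (1 - w) * t))) by (apply Rmult_le_pos; [apply Rmult_le_pos|]; lra).
    lra.
Qed.

Lemma factor_eq a s G L K0 bs v : 0 < a -> 0 < s -> 0 < L ->
  - bs / L * ln 2 = K0 - ln (s / a) ->
  a + G * Rpower 2 (- v / L) * s = a * (1 + G * exp K0 * exp ((bs - v) / L * ln 2)).
Proof.
  intros Ha Hs HL H. unfold Rpower.
  replace (- v / L * ln 2) with ((K0 + (bs - v) / L * ln 2) + - ln (s / a)).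
  2:{ replace (- v / L * ln 2) with (- bs / L * ln 2 + (bs - v) / L * ln 2) by (field; lra). rewrite H. ring. }
  rewrite !exp_plus, exp_Ropp, exp_ln by (apply Rdiv_lt_0_compat; lra).
  field. lra.
Qed.

Lemma rsum_lin n al be f g : rsum n (fun i => al * f i + be * g i) = al * rsum n f + be * rsum n g.
Proof. rewrite rsum_plus, !rsum_scal. reflexivity. Qed.

Theorem theorem3 (M N K : nat) (B : R) (S2 S3 : nat -> nat -> R)
  (hM : (2 <= M)%nat) (hN : (1 <= N)%nat) (hK : (1 <= K)%nat)
  (hS2 : forall n k, (n < N)%nat -> (k < K)%nat -> 0 <= S2 n k)
  (hS3 : forall n k, (n < N)%nat -> (k < K)%nat -> 0 < S3 n k) :
  is_minimizer M N K B S2 S3 (Bstar M N K B S2 S3) /\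
  (forall Bv, is_minimizer M N K B S2 S3 Bv ->
     forall n k, (n < N)%nat -> (k < K)%nat -> Bv n k = Bstar M N K B S2 S3 n k).
Proof.
  assert (HM2 : 2 <= INR M) by (replace 2 with (INR 2) by (simpl; ring); apply le_INR; auto).
  assert (HL : 1 <= INR M - 1) by lra.
  assert (HG : 0 < Gamma ((2 * INR M - 1) / (INR M - 1))).
  { unfold Gamma. apply Gamma_int_pos.
    replace ((2 * INR M - 1) / (INR M - 1)) with (2 + 1 / (INR M - 1)) by (field; lra).
    assert (0 < 1 / (INR M - 1)) by (apply Rdiv_lt_0_compat; lra).
    assert (1 / (INR M - 1) <= 1).
    { apply Rmult_le_reg_r with (INR M - 1). lra. field_simplify; lra. }
    lra. }
  assert (HNK : 0 < INR (N * K)) by (apply lt_0_INR; lia).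
  assert (Hln2 : 0 < ln 2) by (pose proof ln_lt_2; lra).
  set (G := Gamma ((2 * INR M - 1) / (INR M - 1))) in *.
  set (L := INR M - 1) in *.
  set (T := rsum N (fun p => rsum K (fun q => log2 ((1 + S2 p q) / S3 p q)))).
  set (K0 := - (B / INR (N * K) + L / INR (N * K) * T) / L * ln 2).
  set (c := G * exp K0).
  assert (Hc : 0 < c) by (apply Rmult_lt_0_compat; [auto|apply exp_pos]).
  set (w := c / (1 + c)).
  assert (Hw : 0 < w) by (apply Rdiv_lt_0_compat; lra).
  set (bs := Bstar M N K B S2 S3).
  assert (Hfac : forall v n k, (n < N)%nat -> (k < K)%nat ->
    1 + S2 n k + G * Rpower 2 (- v / L) * S3 n k
    = (1 + S2 n k) * (1 + c * exp ((bs n k - v) / L * ln 2))).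
  { intros v n k Hn Hk. unfold c. apply factor_eq.
    - pose proof (hS2 n k Hn Hk); lra.
    - auto.
    - lra.
    - pose proof (hS2 n k Hn Hk). pose proof (hS3 n k Hn Hk).
      unfold bs, Bstar. fold T. unfold K0, log2. unfold L. field. split; lra. }
  assert (Hsum : rsum N (fun n => rsum K (fun k => bs n k)) = B).
  { unfold bs, Bstar. fold L T.
    set (C0 := B / INR (N * K) + L / INR (N * K) * T).
    transitivity (rsum N (fun n => INR K * C0 + L * rsum K (fun k => log2 (S3 n k / (1 + S2 n k))))).
    { apply rsum_ext. intros n Hn.
      rewrite <- rsum_const, <- rsum_scal, <- rsum_plus. apply rsum_ext. intros k Hk. unfold C0. ring. }
    rewrite rsum_plus, rsum_const, rsum_scal.
    assert (E : rsum N (fun n => rsum K (fun k => log2 (S3 n k / (1 + S2 n k)))) = - T).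
    { unfold T. replace (- _) with (-1 * rsum N (fun p => rsum K (fun q => log2 ((1 + S2 p q) / S3 p q)))) by ring.
      rewrite <- rsum_scal. apply rsum_ext. intros n Hn. rewrite <- rsum_scal. apply rsum_ext. intros k Hk.
      pose proof (hS2 n k Hn Hk). pose proof (hS3 n k Hn Hk).
      unfold log2. replace (S3 n k / (1 + S2 n k)) with (/ ((1 + S2 n k) / S3 n k)) by (field; lra).
      rewrite ln_Rinv. field. lra. apply Rdiv_lt_0_compat; lra. }
    rewrite E. unfold C0. rewrite mult_INR in HNK |- *. field. split; apply not_0_INR; lia. }
  assert (Ha : forall n k, (n < N)%nat -> (k < K)%nat -> 0 < 1 + S2 n k).
  { intros n k Hn Hk. pose proof (hS2 n k Hn Hk). lra. }
  assert (Hobj : forall v, objective M N K S2 S3 v = rprod N (fun n => rprod K (fun k =>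
     (1 + S2 n k) * (1 + c * exp ((bs n k - v n k) / L * ln 2))))).
  { intros v. unfold objective. fold G L. apply rprod_ext; intros n Hn; apply rprod_ext; intros k Hk.
    apply Hfac; auto. }
  set (P0 := rprod N (fun n => rprod K (fun k => (1 + S2 n k) * (1 + c)))).
  assert (HP0 : objective M N K S2 S3 bs = P0).
  { rewrite Hobj. apply rprod_ext; intros n Hn; apply rprod_ext; intros k Hk.
    replace ((bs n k - bs n k) / L * ln 2) with 0 by (field; lra). rewrite exp_0, Rmult_1_r. reflexivity. }
  set (Lo := fun v : nat -> nat -> R => rprod N (fun n => rprod K (fun k =>
     (1 + S2 n k) * (1 + c) * exp (w * ((bs n k - v n k) / L * ln 2))))).
  assert (HLo : forall v, Lo v = P0 * exp (w * ln 2 / L * (B - rsum N (fun n => rsum K (fun k => v n k))))).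
  { intros v. unfold Lo, P0.
    transitivity (rprod N (fun n => rprod K (fun k => (1 + S2 n k) * (1 + c)) *
        exp (rsum K (fun k => w * ((bs n k - v n k) / L * ln 2))))).
    { apply rprod_ext; intros n Hn. apply rprod_mul_exp. }
    rewrite rprod_mul_exp. f_equal. f_equal.
    rewrite <- Hsum.
    transitivity (rsum N (fun n => (w * ln 2 / L) * rsum K (fun k => bs n k) + (- (w * ln 2 / L)) * rsum K (fun k => v n k))).
    { apply rsum_ext; intros n Hn. rewrite <- rsum_lin. apply rsum_ext; intros k Hk. field. lra. }
    rewrite rsum_lin. ring. }
  assert (Hpt : forall v n k, (n < N)%nat -> (k < K)%nat ->
     0 < (1 + S2 n k) * (1 + c) * exp (w * ((bs n k - v n k) / L * ln 2)) <=
     (1 + S2 n k) * (1 + c * exp ((bs n k - v n k) / L * ln 2))).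
  { intros v n k Hn Hk. pose proof (Ha n k Hn Hk). split.
    - apply Rmult_lt_0_compat; [apply Rmult_lt_0_compat; lra|apply exp_pos].
    - rewrite Rmult_assoc. apply Rmult_le_compat_l. lra. apply key_ineq. auto. }
  assert (Hle : forall v, Lo v <= objective M N K S2 S3 v).
  { intros v. rewrite Hobj. unfold Lo. apply rprod_le. intros n Hn. split.
    - apply Rlt_le, rprod_pos. intros k Hk. apply Hpt; auto.
    - apply rprod_le. intros k Hk. split; [apply Rlt_le|]; apply Hpt; auto. }
  assert (Hlt : forall v n0 k0, (n0 < N)%nat -> (k0 < K)%nat -> v n0 k0 <> bs n0 k0 ->
     Lo v < objective M N K S2 S3 v).
  { intros v n0 k0 Hn0 Hk0 Hne. rewrite Hobj. unfold Lo. apply rprod_lt.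
    - intros n Hn. split.
      + apply rprod_pos. intros k Hk. apply Hpt; auto.
      + apply rprod_le. intros k Hk. split; [apply Rlt_le|]; apply Hpt; auto.
    - exists n0. split; auto. apply rprod_lt.
      + intros k Hk. apply Hpt; auto.
      + exists k0. split; auto. pose proof (Ha n0 k0 Hn0 Hk0).
        rewrite Rmult_assoc. apply Rmult_lt_compat_l. lra. apply key_ineq. auto.
        intro Ht. apply Hne.
        assert (bs n0 k0 - v n0 k0 = 0).
        { apply Rmult_eq_reg_r with (/ L * ln 2).
          replace ((bs n0 k0 - v n0 k0) * (/ L * ln 2)) with ((bs n0 k0 - v n0 k0) / L * ln 2) by (field; lra).
          rewrite Ht. ring.
          apply Rgt_not_eq, Rmult_lt_0_compat; [apply Rinv_0_lt_compat|]; lra. }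
        lra. }
  assert (HP0pos : 0 < P0).
  { unfold P0. apply rprod_pos; intros n Hn; apply rprod_pos; intros k Hk.
    apply Rmult_lt_0_compat; [apply Ha; auto|lra]. }
  assert (Hfeas : forall v, feasible N K B v -> P0 <= Lo v).
  { intros v Hv. unfold feasible in Hv. rewrite HLo.
    set (x := w * ln 2 / L * (B - rsum N (fun n => rsum K (fun k => v n k)))).
    assert (0 <= x).
    { unfold x. apply Rmult_le_pos; [|lra]. apply Rlt_le. unfold Rdiv.
      apply Rmult_lt_0_compat; [apply Rmult_lt_0_compat|apply Rinv_0_lt_compat]; lra. }
    pose proof (exp_ineq1_le x).
    rewrite <- (Rmult_1_r P0) at 1. apply Rmult_le_compat_l; lra. }
  assert (Hbsf : feasible N K B bs) by (unfold feasible; rewrite Hsum; lra).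
  split.
  - split; [exact Hbsf|]. intros v Hv. rewrite HP0. eapply Rle_trans; [apply (Hfeas v Hv)|apply Hle].
  - intros Bv [HBf HBmin] n k Hn Hk.
    destruct (Req_dec (Bv n k) (bs n k)) as [E|E]; auto. exfalso.
    specialize (HBmin bs Hbsf). rewrite HP0 in HBmin.
    pose proof (Hlt Bv n k Hn Hk E). pose proof (Hfeas Bv HBf). lra.
Qed.
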